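(* Let $G$ be a group with finite symmetric generating set $Z$, let $X,Y$ be finite sets equipped with maps to $G$, let $K\ge0$, and fix a total order on $Y^{\$}$ with induced lexicographic order $\le_{lex}$ on words of equal length over $Y^{\$}$. Suppose $\mathcal{S}\subseteq(Y^{\$})^*$ is a regular language. Then the language $$\mathcal{M}_2=\{(U,V)\in B^*\mid V \text{ is the }\le_{lex}\text{-minimum of }\{V'\in\mathcal{S}\mid (U,V')\in B^* \text{ is a } K\text{-synchronous BCD pair in }(G,d_Z)\}\}$$ is regular.
   Context: Elements of $X$ and $Y$ are regarded as elements of $G$. Let $\$_X\notin X$, $\$_Y\notin Y$ be padding symbols interpreted as the identity of $G$, $X^{\$}=X\cup\{\$_X\}$, $Y^{\$}=Y\cup\{\$_Y\}$, $B=X^{\$}\times Y^{\$}$. A word over $B$ is written $(U,V)$ with $U\in(X^{\$})^*$, $V\in(Y^{\$})^*$ of the same length. For a word $W$, $W_j$ is its prefix of length $j$ ($W_j=W$ if $j>\ell(W)$). $(U,V)\in B^*$ is a $K$-synchronous BCD pair in $(G,d_Z)$ if there exists $g\in G$ with $|g|_Z\le K$ such that $gU=_GVg$ and $|V_j^{-1}gU_j|_Z\le K$ for all $j\ge0$. *)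

(* Defs.v *)
From mathcomp Require Import all_boot.
Set Implicit Arguments. Unset Strict Implicit. Unset Printing Implicit Defensive.
Local Open Scope group_scope.

Definition regular (A : finType) (L : seq A -> Prop) : Prop :=
  exists (Q : finType) (q0 : Q) (d : Q -> A -> Q) (F : pred Q),
    forall w : seq A, L w <-> F (foldl d q0 w).

Definition wordlen_le (G : groupType) (Z : seq G) (K : nat) (g : G) : Prop :=
  exists s : seq G, [/\ all (fun z => z \in Z) s, size s <= K & \prod_(z <- s) z = g].

(* Evaluation in G of a padded word; the padding symbol None is the identity. *)
Definition evalw (G : groupType) (T : Type) (i : T -> G) (W : seq (option T)) : G :=
  \prod_(a <- W) oapp i 1 a.

(* (U,V) is a K-synchronous BCD pair in (G, d_Z); W_j = take j W
   (so W_j = W for j > length W). *)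
Definition bcd_pair (G : groupType) (X Y : Type) (iX : X -> G) (iY : Y -> G)
    (Z : seq G) (K : nat) (U : seq (option X)) (V : seq (option Y)) : Prop :=
  exists g : G,
    [/\ wordlen_le Z K g,
        g * evalw iX U = evalw iY V * g
      & forall j : nat,
          wordlen_le Z K ((evalw iY (take j V))^-1 * g * evalw iX (take j U))].

Fixpoint lexle (T : eqType) (le : rel T) (s t : seq T) : bool :=
  match s, t with
  | a :: s', b :: t' => if a == b then lexle le s' t' else le a b
  | [::], _ => true
  | _ :: _, [::] => false
  end.

(* The language M_2 over B = X^$ x Y^$ (a word over B is a seq of pairs). *)
Definition M2 (G : groupType) (X Y : finType) (iX : X -> G) (iY : Y -> G)
    (Z : seq G) (K : nat) (le : rel (option Y)) (S : seq (option Y) -> Prop)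
    (w : seq (option X * option Y)) : Prop :=
  let U := map fst w in
  let V := map snd w in
  [/\ S V, bcd_pair iX iY Z K U V
    & forall V' : seq (option Y), size V' = size U -> S V' ->
        bcd_pair iX iY Z K U V' -> lexle le V V'].

(* Main.v *)
Require Import Defs.
From mathcomp Require Import all_boot.
From Stdlib Require Setoid.
Local Open Scope group_scope.

Set Implicit Arguments. Unset Strict Implicit. Unset Printing Implicit Defensive.

Lemma regular_ext (A : finType) (L L' : seq A -> Prop) :
  (forall w, L w <-> L' w) -> regular L -> regular L'.
Proof.
move=> H [Q [q0 [d [F HF]]]]; exists Q, q0, d, F => w; split=> [/H/HF|/HF/H] //.
Qed.

Lemma regular_and (A : finType) (L1 L2 : seq A -> Prop) :
  regular L1 -> regular L2 -> regular (fun w => L1 w /\ L2 w).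
Proof.
move=> [Q1 [q1 [d1 [F1 H1]]]] [Q2 [q2 [d2 [F2 H2]]]].
exists (Q1 * Q2)%type, (q1, q2), (fun q a => (d1 q.1 a, d2 q.2 a)),
  (fun q => F1 q.1 && F2 q.2) => w.
have E : forall q, foldl (fun q a => (d1 q.1 a, d2 q.2 a)) q w =
   (foldl d1 q.1 w, foldl d2 q.2 w).
  by elim: w => [|a w IH] [x y] //=; rewrite IH.
rewrite E H1 H2 /=; split; [by case=> -> ->| by case/andP].
Qed.

Lemma regular_not (A : finType) (L : seq A -> Prop) :
  regular L -> regular (fun w => ~ L w).
Proof.
move=> [Q [q0 [d [F HF]]]]; exists Q, q0, d, (predC F) => w; rewrite HF /=.
by case: (F _); split => // H; exfalso; apply: H.
Qed.

Lemma regular_map (A B : finType) (f : B -> A) (L : seq A -> Prop) :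
  regular L -> regular (fun w => L (map f w)).
Proof.
move=> [Q [q0 [d [F HF]]]]; exists Q, q0, (fun q b => d q (f b)), F => w.
rewrite HF; suff -> : forall q, foldl d q (map f w) = foldl (fun q b => d q (f b)) q w by [].
by elim: w => [|a w IH] q //=.
Qed.

Lemma regular_proj (A B : finType) (L : seq (A * B) -> Prop) :
  regular L -> regular (fun u : seq A => exists v : seq B, size v = size u /\ L (zip u v)).
Proof.
move=> [Q [q0 [d [F HF]]]].
pose d' (S : {set Q}) (a : A) : {set Q} :=
  [set q | [exists q1 in S, [exists b, q == d q1 (a, b)]]].
exists {set Q}, [set q0], d', (fun S : {set Q} => [exists q in S, F q]) => u.
have E : forall S q, q \in foldl d' S u <->
   exists2 q1, q1 \in S & exists v : seq B, size v = size u /\ foldl d q1 (zip u v) = q.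
  elim: u => [|a u IH] S q /=.
    split; first by move=> qS; exists q => //; exists [::].
    by case=> q1 q1S [[|b v] [//= _ <-]].
  rewrite IH; split.
    case=> q2; rewrite inE => /exists_inP [q1 q1S /existsP [b /eqP ->]].
    case=> v [sv <-]; exists q1 => //; exists (b :: v); split => //=; by rewrite sv.
  case=> q1 q1S [[|b v] [//= [sv] <-]]; exists (d q1 (a, b)).
    by rewrite inE; apply/exists_inP; exists q1 => //; apply/existsP; exists b.
  by exists v.
split.
  case=> v [sv Lv]; apply/exists_inP; exists (foldl d q0 (zip u v)); last by rewrite -HF.
  by apply/E; exists q0; rewrite ?inE //; exists v.
case/exists_inP => q /E [q1]; rewrite inE => /eqP -> [v [sv <-]] Fq.
by exists v; split => //; apply/HF.
Qed.


Lemma regular_lex (T : finType) (le : rel T) :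
  regular (fun w : seq (T * T) => lexle le (map fst w) (map snd w)).
Proof.
pose d (q : option bool) (a : T * T) : option bool :=
  if q is Some r then Some r else if a.1 == a.2 then None else Some (le a.1 a.2).
exists (option bool : finType), None, d,
  (fun q : option bool => if q is Some r then r else true) => w.
have E : forall r w, foldl d (Some r) w = Some r by move=> r; elim=> //=.
elim: w => [|[a b] w IH] //=; rewrite {1}/d /=.
case: (a == b); first exact: IH.
by rewrite -/d E.
Qed.

Section BCD.
Variables (G : groupType) (Z : seq G) (K : nat) (X Y : finType)
  (iX : X -> G) (iY : Y -> G).

Fixpoint words (k : nat) : seq (seq G) :=
  if k is k'.+1 then [::] :: [seq z :: s | z <- Z, s <- words k'] else [:: [::]].

Lemma mem_words k s : (s \in words k) = all (fun z => z \in Z) s && (size s <= k).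
Proof.
elim: k s => [|k IH] [|z s] //=.
  by rewrite inE /= andbF.
rewrite inE /=; apply/allpairsP/idP.
  by case=> [[z1 s1] /= [Hz Hs [-> ->]]]; rewrite Hz ltnS -IH.
by case/andP=> /andP [Hz Ha] Hs; exists (z, s); split => //=; rewrite IH Ha -ltnS.
Qed.

Definition ball := undup [seq \prod_(z <- s) z | s <- words K].

Lemma wordlenP g : wordlen_le Z K g <-> g \in ball.
Proof.
rewrite mem_undup; split.
  case=> s [Ha Hs <-]; apply: map_f; by rewrite mem_words Ha Hs.
case/mapP => s; rewrite mem_words => /andP [Ha Hs] ->; by exists s.
Qed.

Let m := size ball.

Definition step (k : 'I_m) (a : option X * option Y) : option 'I_m :=
  insub (index ((oapp iY 1 a.2)^-1 * nth 1 ball k * oapp iX 1 a.1) ball).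

Definition runo (o : option 'I_m) (w : seq (option X * option Y)) :=
  foldl (fun o a => obind (fun k => step k a) o) o w.

Definition hh (g : G) (w : seq (option X * option Y)) (j : nat) :=
  (evalw iY (take j (map snd w)))^-1 * g * evalw iX (take j (map fst w)).

Lemma hh0 g w : hh g w 0 = g.
Proof. by rewrite /hh /evalw !take0 !big_nil invg1 mulg1 mul1g. Qed.

Lemma hh_cons g a w j :
  hh g (a :: w) j.+1 = hh ((oapp iY 1 a.2)^-1 * g * oapp iX 1 a.1) w j.
Proof. by rewrite /hh /evalw /= !big_cons invgM !mulgA. Qed.

Lemma runoN w : runo None w = None.
Proof. by elim: w. Qed.

Lemma run_spec w (k k' : 'I_m) :
  runo (Some k) w = Some k' <->
  (forall j, hh (nth 1 ball k) w j \in ball) /\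
  nth 1 ball k' = hh (nth 1 ball k) w (size w).
Proof.
elim: w k => [|a w IH] k.
  rewrite /runo /=; split.
    by case=> ->; rewrite hh0; split => // j; rewrite /hh /evalw /= !big_nil invg1 mulg1 mul1g mem_nth.
  case=> _; rewrite hh0 => /eqP; rewrite nth_uniq ?undup_uniq // => /eqP E.
  by congr Some; apply: val_inj.
have Hk : nth 1 ball k \in ball by rewrite mem_nth.
rewrite /runo /= -/(runo _ _) /step.
case: insubP => [k1 Hk1 Ek1|Hn].
  have E1 : nth 1 ball k1 =
      (oapp iY 1 a.2)^-1 * nth 1 ball k * oapp iX 1 a.1 by rewrite Ek1 nth_index // -index_mem.
  rewrite IH E1; split.
    case=> H1 H2; split; last by rewrite H2 hh_cons.
    by case=> [|j]; rewrite ?hh0 ?hh_cons.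
  by case=> H1 H2; split; [move=> j; rewrite -hh_cons | rewrite H2 hh_cons].
rewrite runoN; split => // [[H _]].
by move: (H 1%N); rewrite hh_cons hh0 -index_mem (negbTE Hn).
Qed.

Lemma regular_bcd :
  regular (fun w : seq (option X * option Y) =>
             bcd_pair iX iY Z K (map fst w) (map snd w)).
Proof.
pose d (f : {ffun 'I_m -> option 'I_m}) (a : option X * option Y) :
  {ffun 'I_m -> option 'I_m} := [ffun i => obind (fun k => step k a) (f i)].
exists ({ffun 'I_m -> option 'I_m} : finType), [ffun i => Some i], d,
  (fun f : {ffun 'I_m -> option 'I_m} => [exists i, f i == Some i]) => w.
have E : forall f i, foldl d f w i = runo (f i) w.
  elim: w => [|a w IH] f i //=; by rewrite IH ffunE.
have Hn : forall g, hh g w (size w) =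
    (evalw iY (map snd w))^-1 * g * evalw iX (map fst w).
  by move=> g; rewrite /hh !take_oversize ?size_map.
split.
  case=> g [Hg Heq Hj]; have gb : g \in ball by apply/wordlenP.
  have gi : index g ball < m by rewrite index_mem.
  have Ei : nth 1 ball (Ordinal gi) = g by rewrite /= nth_index.
  apply/existsP; exists (Ordinal gi); rewrite E ffunE; apply/eqP/run_spec.
  rewrite Ei Hn -mulgA Heq mulgA mulVg mul1g; split => // j.
  by apply/wordlenP; apply: Hj.
case/existsP=> i; rewrite E ffunE => /eqP/run_spec [Hj Hi].
exists (nth 1 ball i); split.
- by apply/wordlenP; rewrite mem_nth.
- by rewrite Hn in Hi; rewrite {2}Hi !mulgA mulgV mul1g.
- by move=> j; apply/wordlenP; move: (Hj j); rewrite /hh.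
Qed.

End BCD.

Unset Implicit Arguments. Set Strict Implicit. Set Printing Implicit Defensive.

Theorem lemma5p13 (G : groupType) (Z : seq G)
    (Zsym : forall z, z \in Z -> z^-1 \in Z)
    (Zgen : forall g : G, exists s : seq G,
        all (fun z => z \in Z) s /\ \prod_(z <- s) z = g)
    (X Y : finType) (iX : X -> G) (iY : Y -> G) (K : nat)
    (le : rel (option Y))
    (le_total : total le) (le_trans : transitive le) (le_anti : antisymmetric le)
    (S : seq (option Y) -> Prop) (S_reg : regular S) :
  regular (M2 iX iY Z K le S).
Proof.
set A := (option X * option Y)%type.
pose T (z : seq (A * option Y)) :=
  S (map snd z) /\ (bcd_pair iX iY Z K (map fst (map fst z)) (map snd z) /\
   ~ lexle le (map snd (map fst z)) (map snd z)).
have RT : regular T.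
  apply: regular_and; first exact: (regular_map snd S_reg).
  apply: regular_and.
    apply: (regular_ext _ (regular_map (fun p : A * option Y => (p.1.1, p.2))
                             (regular_bcd Z K iX iY))).
    by move=> z; rewrite -!map_comp.
  apply: regular_not.
  apply: (regular_ext _ (regular_map (fun p : A * option Y => (p.1.2, p.2))
                             (regular_lex le))).
  by move=> z; rewrite -!map_comp.
have R := regular_and (regular_map snd S_reg)
   (regular_and (regular_bcd Z K iX iY) (regular_not (regular_proj RT))).
apply: (regular_ext _ R) => w /=; rewrite /M2 /=.
have Z1 : forall v : seq (option Y), size v = size w -> map fst (zip w v) = w.
  by move=> v sv; apply: unzip1_zip; rewrite sv.
have Z2 : forall v : seq (option Y), size v = size w -> map snd (zip w v) = v.
  by move=> v sv; apply: unzip2_zip; rewrite sv.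
split.
  case=> HS [Hb Hn]; split => // V' sV' HSV' HbV'.
  rewrite size_map in sV'.
  case E : (lexle le _ _) => //; exfalso; apply: Hn; exists V'; split => //.
  rewrite /T Z1 // Z2 //; split => //; split => //; by rewrite E.
case=> HS Hb Hmin; split => //; split => //.
case=> v [sv [HSv [Hbv Hl]]]; apply: Hl; rewrite Z1 // Z2 //.
apply: Hmin => //; first by rewrite size_map.
  by move: HSv; rewrite Z2.
by move: Hbv; rewrite Z1 // Z2.
Qed.
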